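(* Let $\mathcal{X}$ be a finite set and $\underline{Q}$ a lower transition rate operator on $\mathcal{L}(\mathcal{X})$. Then for any $t\ge0$: $\underline{T}_t$ is regularly absorbing if and only if it is 1-step absorbing.
   Context: $\mathcal{L}(\mathcal{X})$ is the set of real-valued functions on $\mathcal{X}$ with pointwise operations and order, real constants identified with constant functions, $\mathbb{I}_A$ the indicator of $A\subseteq\mathcal{X}$, $\mathbb{I}_x\coloneqq\mathbb{I}_{\{x\}}$; $\mathbb{N}=\{1,2,\dots\}$. A lower transition rate operator is a map $\underline{Q}\colon\mathcal{L}(\mathcal{X})\to\mathcal{L}(\mathcal{X})$ such that for all $f,g$, $\lambda\ge0$, $\mu\in\mathbb{R}$, $x,y\in\mathcal{X}$: $\underline{Q}(\mu)=0$; $\underline{Q}(f+g)\ge\underline{Q}f+\underline{Q}g$; $\underline{Q}(\lambda f)=\lambda\underline{Q}f$; $x\ne y\Rightarrow\underline{Q}(\mathbb{I}_y)(x)\ge0$. For each $f$, $t\mapsto\underline{T}_tf$ is the unique solution on $[0,\infty)$ of $\frac{d}{dt}\underline{T}_tf=\underline{Q}\,\underline{T}_tf$ with $\underline{T}_0f=f$ (existence and uniqueness are known); $\underline{T}_t$ denotes the operator $f\mapsto\underline{T}_tf$. For an operator $\underline{T}$ let $\overline{T}f\coloneqq-\underline{T}(-f)$ and powers denote composition. $\underline{T}$ is regularly absorbing if $\mathcal{X}_{\mathrm{RA}}\coloneqq\{x\colon\exists n\in\mathbb{N},\ \min\overline{T}^n\mathbb{I}_x>0\}\neq\emptyset$ and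 for every $x\in\mathcal{X}\setminus\mathcal{X}_{\mathrm{RA}}$ there is $n\in\mathbb{N}$ with $\underline{T}^n\mathbb{I}_{\mathcal{X}_{\mathrm{RA}}}(x)>0$. $\underline{T}$ is 1-step absorbing if $\mathcal{X}_{\mathrm{1A}}\coloneqq\{x\colon\min\overline{T}\mathbb{I}_x>0\}\neq\emptyset$ and $\underline{T}\mathbb{I}_{\mathcal{X}_{\mathrm{1A}}}(x)>0$ for every $x\in\mathcal{X}\setminus\mathcal{X}_{\mathrm{1A}}$. *)

(* Defs.v *)
From HB Require Import structures.
From mathcomp Require Import all_boot all_order all_algebra.
From mathcomp Require Import all_classical all_reals all_analysis.
Set Implicit Arguments. Unset Strict Implicit. Unset Printing Implicit Defensive.
Import Order.TTheory GRing.Theory Num.Theory.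
Import numFieldNormedType.Exports.
Local Open Scope classical_set_scope.
Local Open Scope ring_scope.

Section Defs.
Variables (R : realType) (X : finType).

Definition op := (X -> R) -> (X -> R).

Definition ind (A : set X) : X -> R := fun y => (`[< A y >])%:R.

Definition lower_rate_op (Q : op) : Prop :=
  [/\ (forall mu : R, Q (fun _ => mu) = (fun _ => 0)),
      (forall f g x, Q f x + Q g x <= Q (f \+ g) x),
      (forall (lam : R) f, 0 <= lam -> Q (fun y => lam * f y) = (fun y => lam * Q f y)) &
      (forall x y : X, x != y -> 0 <= Q (ind [set y]) x)].

Definition upper (T : op) : op := fun f y => - T (fun z => - f z) y.

(* "min f > 0" for a function on the finite set X *)
Definition min_pos (f : X -> R) : Prop := forall y, 0 < f y.

Definition X_RA (T : op) : set X :=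
  [set x | exists n : nat, (0 < n)%N /\ min_pos (iter n (upper T) (ind [set x]))].

Definition regularly_absorbing (T : op) : Prop :=
  X_RA T !=set0 /\
  (forall x, ~ X_RA T x -> exists n : nat, (0 < n)%N /\ 0 < iter n T (ind (X_RA T)) x).

Definition X_1A (T : op) : set X := [set x | min_pos (upper T (ind [set x]))].

Definition one_step_absorbing (T : op) : Prop :=
  X_1A T !=set0 /\ (forall x, ~ X_1A T x -> 0 < T (ind (X_1A T)) x).

(* T is the lower transition semigroup of Q: for every f, t |-> T t f solves
   d/dt T_t f = Q (T_t f) on [0, +oo) (one-sided derivative at 0), T_0 f = f. *)
Definition is_lower_semigroup (Q : op) (T : R -> op) : Prop :=
  forall f : X -> R, T 0 f = f /\
    forall (x : X) (t : R), 0 <= t ->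
      (fun h : R => h^-1 * (T (t + h) f x - T t f x))
        @ within (fun h : R => 0 <= t + h) ((0 : R)^') --> Q (T t f) x.

End Defs.

(* Main.v *)
Require Import Defs.
From HB Require Import structures.
From mathcomp Require Import all_boot all_order all_algebra.
From mathcomp Require Import all_classical all_reals all_analysis.
From mathcomp Require Import ring lra.
Import Order.TTheory GRing.Theory Num.Theory.
Import numFieldNormedType.Exports.
Local Open Scope classical_set_scope.
Local Open Scope ring_scope.

Lemma cvg_eps {R : realType} {P : R -> Prop} {q : R -> R} {L : R} :
  q @ within P (0 : R)^' --> L ->
  forall e, 0 < e -> exists2 d : R, 0 < d & forall h, h != 0 -> `|h| < d -> P h -> `|L - q h| < e.
Proof.
move=> /cvgrPdist_lt H e e0.
have := H e e0.
rewrite /within /= => /nbhs_ballP [d d0 Hd].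
exists d => // h h0 hd Ph.
apply: Hd => //.
by rewrite /ball /= sub0r normrN.
Qed.

Lemma left_min {R : realType} {g : R -> R} {L r k : R} :
  (fun h : R => h^-1 * (g (r + h) - g r)) @ within (fun h : R => 0 <= r + h) ((0:R)^') --> L ->
  0 < r -> (forall s, 0 <= s -> s < r -> g r + k * r <= g s + k * s) -> L + k <= 0.
Proof.
move=> Hc r0 Hs; rewrite leNgt; apply/negP => Lk.
have [d d0 Hd] := cvg_eps Hc _ Lk.
set h := - (Num.min d r / 2).
have m0 : 0 < Num.min d r by rewrite lt_min d0 r0.
have md : Num.min d r <= d by rewrite ge_min lexx.
have mr : Num.min d r <= r by rewrite ge_min lexx orbT.
have hneg : h < 0 by rewrite /h oppr_lt0 divr_gt0.
have := Hd h (ltr0_neq0 hneg).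
rewrite ltr0_norm // /h opprK.
have -> : 0 <= r + - (Num.min d r / 2) by lra.
have -> : Num.min d r / 2 < d by lra.
move=> /(_ isT isT).
have Hg := Hs (r + h); rewrite /h in Hg.
have {}Hg := Hg ltac:(lra) ltac:(lra).
set D := g _ - g r.
have HD : D >= - k * h by rewrite /D /h; lra.
have : h^-1 * D <= h^-1 * (- k * h).
  by rewrite ler_wnM2l // invr_le0 ltW.
have -> : h^-1 * (- k * h) = - k.
  by rewrite mulrC -mulrA mulfV ?(ltr0_neq0 hneg) // mulr1.
move=> H1 H2.
move: H2; rewrite -/h ltr_norml => /andP [H3 H4].
lra.
Qed.

Lemma right_cont {R : realType} {g : R -> R} {L r : R} :
  (fun h : R => h^-1 * (g (r + h) - g r)) @ within (fun h : R => 0 <= r + h) ((0:R)^') --> L ->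
  0 <= r -> forall e, 0 < e -> exists2 d : R, 0 < d & forall h, 0 < h -> h < d -> `|g (r + h) - g r| < e.
Proof.
move=> Hc r0 e e0.
have [d1 d10 Hd] := cvg_eps Hc _ ltr01.
have L1 : 0 < `|L| + 1 by rewrite ltr_wpDl.
exists (Num.min d1 (e / (`|L| + 1))); first by rewrite lt_min d10 divr_gt0.
move=> h h0; rewrite lt_min => /andP [hd1 hd2].
have := Hd h (lt0r_neq0 h0) ltac:(rewrite gtr0_norm //) ltac:(lra).
set q := h^-1 * _ => Hq.
have -> : g (r + h) - g r = h * q.
  by rewrite /q mulrA mulfV ?gt_eqF // mul1r.
rewrite normrM gtr0_norm //.
have Hq' : `|q| < `|L| + 1.
  have := ler_normD (q - L) L; rewrite subrK distrC.
  lra.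
have : h * `|q| <= h * (`|L| + 1) by rewrite ler_wpM2l ?ltW.
have : h * (`|L| + 1) < e.
  by rewrite -ltr_pdivlMr.
lra.
Qed.

Section Main.
Variables (R : realType) (X : finType) (Q : op R X).
Hypothesis HQ : lower_rate_op Q.

Lemma Qext {f g : X -> R} : (forall y, f y = g y) -> Q f = Q g.
Proof. by move=> H; congr Q; apply: funext. Qed.

Lemma Qcst (mu : R) x : Q (fun _ => mu) x = 0.
Proof. by case: HQ => H _ _ _; rewrite H. Qed.

Lemma Qsa (f g : X -> R) x : Q f x + Q g x <= Q (fun y => f y + g y) x.
Proof. by case: HQ => _ H _ _; apply: H. Qed.

Lemma Qhom (lam : R) (f : X -> R) x : 0 <= lam -> Q (fun y => lam * f y) x = lam * Q f x.
Proof. by case: HQ => _ _ H _ l0; rewrite H. Qed.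

Lemma Qind (x y : X) : x != y -> 0 <= Q (ind R [set y]) x.
Proof. by case: HQ => _ _ _ H; apply: H. Qed.

Lemma Qtr (f : X -> R) (c : R) : Q (fun y => f y + c) = Q f.
Proof.
apply: funext => x; apply/eqP; rewrite eq_le; apply/andP; split.
- have := Qsa (fun y => f y + c) (fun _ => - c) x.
  have -> : (fun y => (fun y => f y + c) y + (fun _ => - c) y) = f.
    by apply: funext => y /=; rewrite addrK.
  by rewrite Qcst addr0.
- have := Qsa f (fun _ => c) x.
  by rewrite Qcst addr0.
Qed.

Lemma Qneg (f : X -> R) x : Q (fun y => - f y) x <= - Q f x.
Proof.
have := Qsa f (fun y => - f y) x.
have -> : (fun y => f y + (fun y => - f y) y) = (fun _ => 0).
  by apply: funext => y /=; rewrite subrr.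
rewrite Qcst; lra.
Qed.

Lemma Qsum (I : Type) (s : seq I) (F : I -> X -> R) x :
  \sum_(i <- s) Q (F i) x <= Q (fun y => \sum_(i <- s) F i y) x.
Proof.
elim: s => [|a s IH].
  have -> : (fun y => \sum_(i <- [::]) F i y) = (fun _ => 0).
    by apply: funext => y; rewrite big_nil.
  by rewrite big_nil Qcst.
have -> : (fun y => \sum_(i <- a :: s) F i y) = (fun y => F a y + \sum_(i <- s) F i y).
  by apply: funext => y; rewrite big_cons.
rewrite big_cons.
apply: le_trans (Qsa _ _ x); by rewrite lerD2l.
Qed.

Lemma ind_in (A : set X) y : A y -> ind R A y = 1.
Proof. by rewrite /ind => Ay; rewrite asboolT. Qed.

Lemma ind_out (A : set X) y : ~ A y -> ind R A y = 0.
Proof. by rewrite /ind => Ay; rewrite asboolF. Qed.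

Lemma ind_ge0 (A : set X) y : 0 <= ind R A y.
Proof. by rewrite /ind ler0n. Qed.

Lemma ind_le1 (A : set X) y : ind R A y <= 1.
Proof. by rewrite /ind; case: asboolP. Qed.

Lemma Qmin (g : X -> R) x : (forall y, g x <= g y) -> 0 <= Q g x.
Proof.
move=> Hm.
set h := fun y => g y - g x.
have -> : g = fun y => h y + g x by apply: funext => y; rewrite /h subrK.
rewrite Qtr.
have -> : h = fun y => \sum_(z <- index_enum X) (h z * ind R [set z] y).
  apply: funext => y; rewrite (bigD1 y) //= ind_in // mulr1 big1 ?addr0 //.
  by move=> z zy; rewrite ind_out ?mulr0 // => /= E; move: zy; rewrite E eqxx.
have HS := Qsum _ (index_enum X) (fun z y => h z * ind R [set z] y) x.
apply: le_trans HS; apply: sumr_ge0 => z _.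
rewrite Qhom; last by rewrite /h subr_ge0.
case: (eqVneq x z) => [<-|xz]; first by rewrite /h subrr mul0r.
by rewrite mulr_ge0 // ?Qind // /h subr_ge0.
Qed.

Definition hasder (w d : R -> X -> R) := forall r x, 0 <= r ->
  (fun h : R => h^-1 * (w (r + h) x - w r x)) @ within (fun h : R => 0 <= r + h) ((0:R)^') --> d r x.

Lemma hasder_cst (c : X -> R) : hasder (fun _ => c) (fun _ _ => 0).
Proof.
move=> r x r0.
have -> : (fun h : R => h^-1 * (c x - c x)) = fun _ => 0.
  by apply: funext => h; rewrite subrr mulr0.
exact: cvg_cst.
Qed.

Lemma hasder_sub {a b da db} : hasder a da -> hasder b db ->
  hasder (fun r x => a r x - b r x) (fun r x => da r x - db r x).
Proof.
move=> Ha Hb r x r0.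
have -> : (fun h : R => h^-1 * ((a (r + h) x - b (r + h) x) - (a r x - b r x))) =
   (fun h : R => h^-1 * (a (r + h) x - a r x) - h^-1 * (b (r + h) x - b r x)).
  by apply: funext => h /=; rewrite -mulrBr; congr (_ * _); ring.
exact: cvgB (Ha r x r0) (Hb r x r0).
Qed.

Lemma hasder_scale (c : R) {a da} : hasder a da ->
  hasder (fun r x => c * a r x) (fun r x => c * da r x).
Proof.
move=> Ha r x r0.
have -> : (fun h : R => h^-1 * (c * a (r + h) x - c * a r x)) =
   (fun h : R => c * (h^-1 * (a (r + h) x - a r x))).
  by apply: funext => h /=; ring.
exact: cvgMl_tmp (Ha r x r0).
Qed.

Lemma comparison {w d} : hasder w d -> (forall r x, 0 <= r -> Q (w r) x <= d r x) ->
  (forall x, 0 <= w 0 x) -> forall r x, 0 <= r -> 0 <= w r x.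
Proof.
move=> Hd HdQ H0.
suff He : forall e, 0 < e -> forall r x, 0 <= r -> 0 < w r x + e * (1 + r).
  move=> r x r0; rewrite leNgt; apply/negP => wn.
  have e0 : 0 < - w r x / (2 * (1 + r)).
    by rewrite divr_gt0 // ?oppr_gt0 // mulr_gt0 //; lra.
  have := He _ e0 r x r0.
  have -> : - w r x / (2 * (1 + r)) * (1 + r) = - w r x / 2.
    field; lra.
  lra.
move=> e e0 r0 x0 r00; rewrite ltNge; apply/negP => Hneg.
set W := fun r x => w r x + e * (1 + r).
set E := fun y => [set s : R | 0 <= s /\ W s y <= 0].
have lbE : forall y, lbound (E y) 0 by move=> y s [].
have hlbE : forall y, has_lbound (E y) by move=> y; exists 0.
pose P := [pred y | `[< E y !=set0 >] ].
have Px0 : P x0 by apply/asboolP; exists r0.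
case: (arg_minP (fun y => inf (E y)) Px0) => x1 Px1 Hmin.
set rs := inf (E x1).
have E1ne : E x1 !=set0 by apply/asboolP.
have rs0 : 0 <= rs := lb_le_inf E1ne (lbE x1).
have Ers : E x1 rs.
  apply: contrapT => nE.
  have Wp : 0 < W rs x1.
    rewrite ltNge; apply/negP => Hn; exact: nE.
  have [dl dl0 Hdl] := right_cont (g := fun s => w s x1) (Hd rs x1 rs0) rs0 _ (divr_gt0 Wp (ltr0Sn _ 1)).
  have [e' Ee' e'lt] := inf_adherent dl0 (conj E1ne (hlbE x1)).
  have le' : rs <= e' := ge_inf (hlbE x1) Ee'.
  case: (eqVneq e' rs) => [eq|neq]; first by apply: nE; rewrite -eq.
  have hp : 0 < e' - rs by rewrite subr_gt0 lt_neqAle eq_sym neq le'.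
  have := Hdl (e' - rs) hp ltac:(rewrite /rs; lra).
  have -> : rs + (e' - rs) = e' by rewrite addrC subrK.
  move=> Hn.
  have [_ We] := Ee'.
  move: We Wp Hn; rewrite /W ltr_norml => We Wp /andP [Hn1 Hn2].
  have : e * (1 + rs) <= e * (1 + e') by rewrite ler_wpM2l ?ltW //; lra.
  lra.
have pos : forall s y, 0 <= s -> s < rs -> 0 < W s y.
  move=> s y s0 slt; rewrite ltNge; apply/negP => Wn.
  have Py : P y by apply/asboolP; exists s.
  have := Hmin y Py; have := ge_inf (hlbE y) (conj s0 Wn : E y s).
  rewrite -/rs; lra.
have rsp : 0 < rs.
  rewrite lt_neqAle rs0 andbT; apply/eqP => rs_eq.
  have [_ Hw] := Ers; move: Hw; rewrite /W -rs_eq addr0 mulr1.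
  have := H0 x1; lra.
have [z _ Hz] := @arg_minP _ _ _ x1 predT (fun y => W rs y) isT.
have Hl := left_min (g := fun s => w s z) (L := d rs z) (k := e) (Hd rs z (ltW rsp)) rsp.
have Hl' : d rs z + e <= 0.
  apply: Hl => s s0 slt.
  have := Hz x1 isT; have := pos s z s0 slt; have [_ Hw] := Ers; move: Hw.
  rewrite /W; lra.
have Qz : 0 <= Q (w rs) z.
  apply: Qmin => y; have := Hz y isT; rewrite /W; lra.
have := HdQ rs z (ltW rsp); lra.
Qed.

Lemma comp_gen {a b da db} : hasder a da -> hasder b db ->
  (forall r x, 0 <= r -> Q (a r) x - Q (b r) x <= da r x - db r x) ->
  (forall x, b 0 x <= a 0 x) -> forall r x, 0 <= r -> b r x <= a r x.
Proof.
move=> Ha Hb H H0 r x r0.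
rewrite -subr_ge0.
have HC := comparison (hasder_sub Ha Hb).
apply: (HC _ _ r x r0) => [s y s0|y] /=.
  apply: le_trans (H s y s0).
  have := Qsa (fun y => a s y - b s y) (b s) y.
  have -> : (fun y0 => (fun y1 => a s y1 - b s y1) y0 + b s y0) = a s.
    by apply: funext => z /=; rewrite subrK.
  lra.
by rewrite subr_ge0.
Qed.

Variable T : R -> op R X.
Hypothesis HT : is_lower_semigroup Q T.

Lemma hasder_traj f : hasder (fun r => T r f) (fun r => Q (T r f)).
Proof. by move=> r x r0; exact: (HT f).2 x r r0. Qed.

Lemma T0 f : T 0 f = f.
Proof. exact: (HT f).1. Qed.

Lemma mono {f g} : (forall y, f y <= g y) -> forall r x, 0 <= r -> T r f x <= T r g x.
Proof.
move=> fg.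
apply: (comp_gen (hasder_traj g) (hasder_traj f)) => [r x r0|x]; first by rewrite lexx.
by rewrite !T0.
Qed.

Lemma Tzero r x : 0 <= r -> T r (fun _ => 0) x = 0.
Proof.
move=> r0; apply/eqP; rewrite eq_le; apply/andP; split.
- apply: (comp_gen (hasder_cst (fun _ => 0)) (hasder_traj (fun _ => 0)) _ _ r x r0) => [s y s0|y].
    rewrite Qcst; lra.
  by rewrite T0.
- apply: (comp_gen (hasder_traj (fun _ => 0)) (hasder_cst (fun _ => 0)) _ _ r x r0) => [s y s0|y].
    rewrite Qcst; lra.
  by rewrite T0.
Qed.

Lemma Tnonneg g r x : 0 <= r -> (forall y, 0 <= g y) -> 0 <= T r g x.
Proof. by move=> r0 g0; rewrite -(Tzero r x r0); apply: mono. Qed.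

Lemma Tnonpos g r x : 0 <= r -> (forall y, g y <= 0) -> T r g x <= 0.
Proof. by move=> r0 g0; rewrite -(Tzero r x r0); apply: mono. Qed.

Lemma Thom c f r x : 0 <= c -> 0 <= r -> T r (fun y => c * f y) x = c * T r f x.
Proof.
move=> c0 r0; apply/eqP; rewrite eq_le; apply/andP; split.
- apply: (comp_gen (hasder_scale c (hasder_traj f)) (hasder_traj (fun y => c * f y)) _ _ r x r0) => [s y s0|y].
    by rewrite Qhom // lexx.
  by rewrite !T0.
- apply: (comp_gen (hasder_traj (fun y => c * f y)) (hasder_scale c (hasder_traj f)) _ _ r x r0) => [s y s0|y].
    by rewrite Qhom // lexx.
  by rewrite !T0.
Qed.

Lemma ind_sub {A B : set X} : A `<=` B -> forall y, ind R A y <= ind R B y.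
Proof.
move=> AB y; case: (pselect (A y)) => Ay; first by rewrite !ind_in //; apply: AB.
by rewrite ind_out // ind_ge0.
Qed.

Definition lclosed (C : set X) := forall z, ~ C z -> Q (ind R C) z <= 0.
Definition uclosed (D : set X) := forall z, ~ D z -> 0 <= Q (fun y => - ind R D y) z.

Lemma lclosed_bound {C} : lclosed C -> forall r x, 0 <= r -> T r (ind R C) x <= ind R C x.
Proof.
move=> HC.
have QC : forall x, Q (ind R C) x <= 0.
  move=> x; case: (pselect (C x)) => Cx; last exact: HC.
  have -> : ind R C = fun y => - ind R (~` C) y + 1.
    apply: funext => y; case: (pselect (C y)) => Cy.
      by rewrite ind_in // ind_out ?oppr0 ?add0r // => /(_ Cy).
    by rewrite ind_out // ind_in // addrC subrr.
  rewrite Qtr; apply: le_trans (Qneg _ _) _; rewrite oppr_le0.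
  by apply: Qmin => y; rewrite ind_out ?ind_ge0 // => /(_ Cx).
apply: (comp_gen (hasder_cst (ind R C)) (hasder_traj (ind R C))) => [r x r0|x].
  have := QC x; lra.
by rewrite T0.
Qed.

Lemma uclosed_bound {D} : uclosed D -> forall r x, 0 <= r ->
  - ind R D x <= T r (fun y => - ind R D y) x.
Proof.
move=> HD.
have QD : forall x, 0 <= Q (fun y => - ind R D y) x.
  move=> x; case: (pselect (D x)) => Dx; last exact: HD.
  have -> : (fun y => - ind R D y) = fun y => ind R (~` D) y + (- 1).
    apply: funext => y; case: (pselect (D y)) => Dy.
      by rewrite ind_in // ind_out ?add0r // => /(_ Dy).
    by rewrite ind_out // ind_in // oppr0 subrr.
  rewrite Qtr.
  by apply: Qmin => y; rewrite ind_out ?ind_ge0 // => /(_ Dx).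
apply: (comp_gen (hasder_traj (fun y => - ind R D y)) (hasder_cst (fun y => - ind R D y))) => [r x r0|x].
  have := QD x; lra.
by rewrite T0.
Qed.

Definition Phi t (B : set X) := [set y | 0 < T t (ind R B) y].
Definition Dset t (U : set X) := [set y | T t (fun z => - ind R U z) y < 0].

Lemma Phi_closed t B : 0 < t -> lclosed (Phi t B).
Proof.
move=> t0 z nz.
set G := T t (ind R B).
have G0 : forall y, 0 <= G y by move=> y; apply: Tnonneg (ltW t0) _ => w; exact: ind_ge0.
have Gz : G z = 0.
  apply/eqP; rewrite eq_le G0 andbT leNgt; apply/negP => H; exact: nz.
have Hd : Q G z <= 0.
  have := left_min (g := fun s => T s (ind R B) z) (k := 0) (hasder_traj (ind R B) t z (ltW t0)) t0.
  rewrite addr0; apply => s s0 st.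
  rewrite !mul0r !addr0 -/G Gz; apply: Tnonneg => // w; exact: ind_ge0.
case: (pselect (exists y, Phi t B y)) => [[y0 Py0]|none].
- pose P := [pred y | `[< Phi t B y >] ].
  have Py0' : P y0 by apply/asboolP.
  case: (arg_minP G Py0') => y1 /asboolP Py1 Hmin.
  set c := G y1.
  have c0 : 0 < c by exact: Py1.
  set h := fun y => G y - c * ind R (Phi t B) y.
  have Hh : 0 <= Q h z.
    apply: Qmin => y; rewrite /h ind_out // mulr0 subr0 Gz.
    case: (pselect (Phi t B y)) => Py.
      by rewrite ind_in // mulr1 subr_ge0; apply: Hmin; apply/asboolP.
    by rewrite ind_out // mulr0 subr0.
  have := Qsa (fun y => c * ind R (Phi t B) y) h z.
  have -> : (fun y => (fun y => c * ind R (Phi t B) y) y + h y) = G.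
    by apply: funext => y; rewrite /h /= addrC subrK.
  rewrite (Qhom c (ind R (Phi t B)) z (ltW c0)) => H.
  have : c * Q (ind R (Phi t B)) z <= 0 by lra.
  by rewrite (pmulr_rle0 _ c0).
- have -> : ind R (Phi t B) = fun _ => 0.
    by apply: funext => y; rewrite ind_out // => Py; apply: none; exists y.
  by rewrite Qcst.
Qed.

Lemma Phi_sub t B C : 0 <= t -> B `<=` C -> lclosed C -> Phi t B `<=` C.
Proof.
move=> t0 BC HC y Py; apply: contrapT => nC.
have := mono (ind_sub BC) t y t0; have := lclosed_bound HC t y t0.
rewrite ind_out //; move: Py; rewrite /Phi /=; lra.
Qed.

Lemma support_low t g y : 0 <= t -> (forall z, 0 <= g z) -> 0 < T t g y ->
  Phi t [set z | 0 < g z] y.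
Proof.
move=> t0 g0 Hy.
set M := \sum_z g z.
have M0 : 0 <= M by apply: sumr_ge0.
have gle : forall z, g z <= M * ind R [set z | 0 < g z] z.
  move=> z; case: (pselect (0 < g z)) => gz.
    rewrite ind_in // mulr1 /M (bigD1 z) //= lerDl; exact: sumr_ge0.
  by rewrite ind_out // mulr0 leNgt; apply/negP.
have := mono gle t y t0; rewrite Thom // => H.
rewrite /Phi /= ltNge; apply/negP => H2.
have : M * T t (ind R [set z | 0 < g z]) y <= 0 by rewrite mulr_ge0_le0.
lra.
Qed.

Lemma D_closed t U : 0 < t -> uclosed (Dset t U).
Proof.
move=> t0 z nz.
set V := T t (fun y => - ind R U y).
have V0 : forall y, V y <= 0.
  by move=> y; apply: Tnonpos (ltW t0) _ => w; rewrite oppr_le0 ind_ge0.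
have Vz : V z = 0.
  apply/eqP; rewrite eq_le V0 /= leNgt; apply/negP => H; exact: nz.
have Hd : 0 <= Q V z.
  have := left_min (g := fun s => -1 * T s (fun y => - ind R U y) z) (k := 0)
    (hasder_scale (-1) (hasder_traj (fun y => - ind R U y)) t z (ltW t0)) t0.
  rewrite addr0 => H.
  have : -1 * Q V z <= 0.
    apply: H => s s0 st.
    rewrite !mul0r !addr0 -/V Vz mulr0 mulN1r oppr_ge0.
    by apply: Tnonpos => // w; rewrite oppr_le0 ind_ge0.
  by rewrite mulN1r oppr_le0.
case: (pselect (exists y, Dset t U y)) => [[y0 Py0]|none].
- pose P := [pred y | `[< Dset t U y >] ].
  have Py0' : P y0 by apply/asboolP.
  case: (arg_minP (fun y => - V y) Py0') => y1 /asboolP Py1 Hmin.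
  set c := - V y1.
  have c0 : 0 < c by rewrite /c oppr_gt0; exact: Py1.
  set h := fun y => - V y - c * ind R (Dset t U) y.
  have Hh : 0 <= Q h z.
    apply: Qmin => y; rewrite /h ind_out // mulr0 subr0 Vz oppr0.
    case: (pselect (Dset t U y)) => Py.
      by rewrite ind_in // mulr1 subr_ge0; apply: Hmin; apply/asboolP.
    by rewrite ind_out // mulr0 subr0 oppr_ge0.
  have := Qsa V h z.
  have -> : (fun y => V y + h y) = (fun y => c * (fun y => - ind R (Dset t U) y) y).
    by apply: funext => y; rewrite /h /=; ring.
  rewrite (Qhom c (fun y => - ind R (Dset t U) y) z (ltW c0)) => H.
  have : 0 <= c * Q (fun y => - ind R (Dset t U) y) z by lra.
  by rewrite (pmulr_rge0 _ c0).
- have -> : (fun y => - ind R (Dset t U) y) = fun _ => 0.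
    by apply: funext => y; rewrite ind_out ?oppr0 // => Py; apply: none; exists y.
  by rewrite Qcst.
Qed.

Lemma D_sub t U D : 0 <= t -> U `<=` D -> uclosed D -> Dset t U `<=` D.
Proof.
move=> t0 UD HD y Py; apply: contrapT => nD.
have le : forall z, - ind R D z <= - ind R U z by move=> z; rewrite lerN2 ind_sub.
have := mono le t y t0; have := uclosed_bound HD t y t0.
rewrite ind_out // oppr0; move: Py; rewrite /Dset /=; lra.
Qed.

Lemma support_up t g y : 0 <= t -> (forall z, 0 <= g z) -> 0 < upper (T t) g y ->
  Dset t [set z | 0 < g z] y.
Proof.
move=> t0 g0; rewrite /upper oppr_gt0 => Hy.
set M := \sum_z g z.
have M0 : 0 <= M by apply: sumr_ge0.
have gle : forall z, M * (fun z => - ind R [set z | 0 < g z] z) z <= - g z.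
  move=> z /=; rewrite mulrN lerN2; case: (pselect (0 < g z)) => gz.
    rewrite ind_in // mulr1 /M (bigD1 z) //= lerDl; exact: sumr_ge0.
  by rewrite ind_out // mulr0 leNgt; apply/negP.
have := mono gle t y t0; rewrite Thom // => H.
rewrite /Dset /= ltNge; apply/negP => H2.
have : 0 <= M * T t (fun z => - ind R [set z | 0 < g z] z) y by rewrite mulr_ge0.
lra.
Qed.

Lemma iter_low_nonneg t A k y : 0 <= t -> 0 <= iter k (T t) (ind R A) y.
Proof.
move=> t0; elim: k y => [|k IH] y /=; first exact: ind_ge0.
exact: Tnonneg.
Qed.

Lemma iter_up_nonneg t A k y : 0 <= t -> 0 <= iter k (upper (T t)) (ind R A) y.
Proof.
move=> t0; elim: k y => [|k IH] y /=; first exact: ind_ge0.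
rewrite /upper oppr_ge0; apply: Tnonpos => // z; rewrite oppr_le0; exact: IH.
Qed.

Lemma low_iter t A : 0 < t -> forall n x, (0 < n)%N ->
  0 < iter n (T t) (ind R A) x -> 0 < T t (ind R A) x.
Proof.
move=> t0; elim=> [|n IH] x //= _.
case: n IH => [|n] IH; first by [].
move=> Hx.
have := support_low t _ x (ltW t0) (fun z => iter_low_nonneg t A n.+1 z (ltW t0)) Hx.
move/(Phi_sub t _ _ (ltW t0) _ (Phi_closed t A t0)); apply.
by move=> z Hz; apply: IH.
Qed.

Lemma XRA_eq t : 0 < t -> X_RA (T t) = X_1A (T t).
Proof.
move=> t0; apply/seteqP; split => x; last by move=> Hx; exists 1%N.
move=> [n [n0 Hmin]].
have key : forall k y, (0 < k)%N -> 0 < iter k (upper (T t)) (ind R [set x]) y ->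
    Dset t [set x] y.
  elim=> [|k IH] y //= _.
  case: k IH => [|k] IH; first by rewrite /upper /= oppr_gt0.
  move=> Hy.
  have := support_up t _ y (ltW t0) (fun z => iter_up_nonneg t [set x] k.+1 z (ltW t0)) Hy.
  move/(D_sub t _ _ (ltW t0) _ (D_closed t [set x] t0)); apply.
  by move=> z Hz; apply: IH.
move=> y; rewrite /upper oppr_gt0.
exact: key n y n0 (Hmin y).
Qed.

End Main.


Lemma abstract_eq (R : realType) (X : finType) (Tt : op R X) :
  X_RA Tt = X_1A Tt ->
  (forall n x, (0 < n)%N -> 0 < iter n Tt (ind R (X_RA Tt)) x -> 0 < Tt (ind R (X_RA Tt)) x) ->
  regularly_absorbing Tt <-> one_step_absorbing Tt.
Proof.
move=> E H; split => [[ne Hx]|[ne Hx]].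
- split; first by rewrite -E.
  move=> x nx; rewrite -E in nx *.
  have [n [n0 Hn]] := Hx x nx; exact: H n x n0 Hn.
- split; first by rewrite E.
  move=> x nx; exists 1%N; split => //=; rewrite E in nx *; exact: Hx.
Qed.

Lemma iter_idf (R : realType) (X : finType) n (g : X -> R) : iter n (fun f : X -> R => f) g = g.
Proof. by elim: n. Qed.

Theorem proposition10 (R : realType) (X : finType) (Q : op R X) (T : R -> op R X) :
  lower_rate_op Q -> is_lower_semigroup Q T ->
  forall t : R, 0 <= t ->
    (regularly_absorbing (T t) <-> one_step_absorbing (T t)).
Proof.
move=> HQ HT t; rewrite le_eqVlt => /orP [/eqP <-|t0].
- have -> : T 0 = (fun f => f) by apply: funext => f; exact: (HT f).1.
  have Hu : upper (fun f : X -> R => f) = (fun f => f).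
    by apply: funext => f; apply: funext => y; rewrite /upper opprK.
  apply: abstract_eq => [|n x _]; last by rewrite iter_idf.
  apply/seteqP; split => x; last by move=> Hx; exists 1%N.
  by move=> [n [_ Hn]]; rewrite /X_1A /= Hu; move: Hn; rewrite Hu iter_idf.
- apply: abstract_eq; first exact: XRA_eq _ _ _ HQ _ HT t t0.
  exact: low_iter _ _ _ HQ _ HT t _ t0.
Qed.
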